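(* Let $\mathsf{M}_{\rho_0}[\boldsymbol{\beta},\boldsymbol{\alpha}]\triangleq\mathbb{E}_{\rho_0(\mathbf{x})}[\boldsymbol{\beta}(\mathbf{x})\boldsymbol{\alpha}(\mathbf{x})^\intercal]$. Let $\mathbf{z}\in\mathbb{C}^r$ be a left eigenvector of $\mathsf{M}_{\rho_0}[\boldsymbol{\beta},\boldsymbol{\alpha}]$ with eigenvalue $\lambda\in\mathbb{C}$, i.e., $\mathbf{z}^*\mathsf{M}_{\rho_0}[\boldsymbol{\beta},\boldsymbol{\alpha}]=\lambda\mathbf{z}^*$. If we define $\zeta(\mathbf{x}')\triangleq\mathbf{z}^\intercal\boldsymbol{\beta}(\mathbf{x}')$, then $\zeta$ is a left eigenfunction of $\mathcal{K}$ with eigenvalue $\lambda$, i.e., $\mathcal{K}^*\zeta=\overline{\lambda}\zeta$.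
   Context: Let $\mathcal{X}\subseteq\mathbb{R}^d$, let $p(\mathbf{x}'|\mathbf{x})$ be the transition density of a time-homogeneous Markov process, and let $\rho_0,\rho_1$ be the distributions of the current and future states. The Koopman operator $\mathcal{K}\colon L^2_{\rho_1}(\mathcal{X})\to L^2_{\rho_0}(\mathcal{X})$ is $(\mathcal{K}g)(\mathbf{x})=\int k(\mathbf{x},\mathbf{x}')g(\mathbf{x}')\rho_1(\mathbf{x}')d\mathbf{x}'$ with kernel $k(\mathbf{x},\mathbf{x}')\triangleq p(\mathbf{x}'|\mathbf{x})/\rho_1(\mathbf{x}')$, and its adjoint is $(\mathcal{K}^*f)(\mathbf{x}')=\int k(\mathbf{x},\mathbf{x}')f(\mathbf{x})\rho_0(\mathbf{x})d\mathbf{x}$. Assume the operator has finite rank with factorized kernel $k(\mathbf{x},\mathbf{x}')=\boldsymbol{\alpha}(\mathbf{x})^\intercal\boldsymbol{\beta}(\mathbf{x}')=\sum_{i=1}^r\alpha_i(\mathbf{x})\beta_i(\mathbf{x}')$. *)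

(* Defs.v *)
From HB Require Import structures.
From mathcomp Require Import all_boot all_order all_algebra.
From mathcomp Require Import all_classical all_reals all_analysis.
From mathcomp Require Import complex.
Set Implicit Arguments. Unset Strict Implicit. Unset Printing Implicit Defensive.
Import Order.TTheory GRing.Theory Num.Theory.
Local Open Scope ring_scope.
Local Open Scope classical_set_scope.

Section Defs.
Context {dT : measure_display} {T : measurableType dT} {R : realType}.

Definition cintegral (mu : {measure set T -> \bar R}) (f : T -> R[i]) : R[i] :=
  Complex (Rintegral mu setT (fun x => complex.Re (f x)))
          (Rintegral mu setT (fun x => complex.Im (f x))).

(* Adjoint Koopman operator with (real) kernel k, acting on complex functions:
   (K^* f)(x') = \int k(x,x') f(x) rho_0(x) dx, where P0 is the law rho_0. *)
Definition koopman_adj (P0 : {measure set T -> \bar R}) (k : T -> T -> R)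
  (f : T -> R[i]) : T -> R[i] :=
  fun x' => cintegral P0 (fun x => (k x x')%:C%C * f x).

Definition Mrho {r : nat} (P0 : {measure set T -> \bar R})
  (beta alpha : 'I_r -> T -> R) : 'M[R]_r :=
  \matrix_(i, j) Rintegral P0 setT (fun x => beta i x * alpha j x).

End Defs.

(* Main.v *)
Require Import Defs.
From HB Require Import structures.
From mathcomp Require Import all_boot all_order all_algebra.
From mathcomp Require Import all_classical all_reals all_analysis.
From mathcomp Require Import complex.
From mathcomp Require Import ring.
Import Order.TTheory GRing.Theory Num.Theory.
Local Open Scope ring_scope.
Local Open Scope classical_set_scope.

Section H.
Context {R : realType} {dT : measure_display} {T : measurableType dT}.
Variable mu : {measure set T -> \bar R}.

Lemma Rint_sum (I : Type) (s : seq I) (g : I -> T -> R) :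
  (forall i, mu.-integrable setT (EFin \o g i)) ->
  Rintegral mu setT (fun x => \sum_(i <- s) g i x) = \sum_(i <- s) Rintegral mu setT (g i).
Proof.
move=> hg; elim: s => [|a s IH].
  rewrite big_nil.
  under eq_Rintegral do rewrite big_nil.
  by rewrite (Rintegral_cst _ measurableT 0) mul0r.
rewrite big_cons -IH.
under eq_Rintegral do rewrite big_cons.
rewrite RintegralD //.
elim: s {IH} => [|b s IH].
  apply: (eq_integrable _ (cst 0%E)) => //.
    by move=> x _; rewrite /= big_nil.
  exact: integrable0.
apply: (eq_integrable _ ((EFin \o g b) \+ (EFin \o fun x => \sum_(i <- s) g i x))) => //.
  by move=> x _; rewrite /= big_cons.
exact: integrableD.
Qed.

Lemma intZ (a : R) (f : T -> R) : mu.-integrable setT (EFin \o f) ->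
  mu.-integrable setT (EFin \o (fun x => a * f x)).
Proof.
move=> hf; apply: (eq_integrable measurableT (fun x => (a%:E * (EFin \o f) x)%E)).
  by move=> x _; rewrite /= EFinM.
exact: integrableZl.
Qed.

Lemma Re_sum (I : Type) (s : seq I) (f : I -> R[i]) :
  complex.Re (\sum_(i <- s) f i) = \sum_(i <- s) complex.Re (f i).
Proof.
elim: s => [|a s IH]; rewrite ?big_nil ?big_cons //.
by rewrite -IH; case: (f a) => ? ?; case: (\sum_(i <- s) f i).
Qed.

Lemma Im_sum (I : Type) (s : seq I) (f : I -> R[i]) :
  complex.Im (\sum_(i <- s) f i) = \sum_(i <- s) complex.Im (f i).
Proof.
elim: s => [|a s IH]; rewrite ?big_nil ?big_cons //.
by rewrite -IH; case: (f a) => ? ?; case: (\sum_(i <- s) f i).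
Qed.

Lemma cint_lin (I : Type) (s : seq I) (c : I -> R[i]) (g : I -> T -> R) :
  (forall i, mu.-integrable setT (EFin \o g i)) ->
  cintegral mu (fun x => \sum_(i <- s) c i * (g i x)%:C%C)
  = \sum_(i <- s) c i * (Rintegral mu setT (g i))%:C%C.
Proof.
move=> hg; rewrite /cintegral; apply/eqP; rewrite eq_complex /=; apply/andP; split; apply/eqP.
- under eq_Rintegral do rewrite Re_sum.
  rewrite Re_sum.
  have h i x : complex.Re (c i * (g i x)%:C%C) = complex.Re (c i) * g i x.
    by case: (c i) => a b /=; rewrite mulr0 subr0.
  have h' i : complex.Re (c i * (Rintegral mu setT (g i))%:C%C) = complex.Re (c i) * Rintegral mu setT (g i).
    by case: (c i) => a b /=; rewrite mulr0 subr0.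
  under eq_Rintegral do under eq_bigr do rewrite h.
  under [RHS]eq_bigr do rewrite h'.
  rewrite Rint_sum; last by move=> i; exact: intZ.
  by apply: eq_bigr => i _; rewrite RintegralZl.
- under eq_Rintegral do rewrite Im_sum.
  rewrite Im_sum.
  have h i x : complex.Im (c i * (g i x)%:C%C) = complex.Im (c i) * g i x.
    by case: (c i) => a b /=; rewrite mulr0 add0r mulrC.
  have h' i : complex.Im (c i * (Rintegral mu setT (g i))%:C%C) = complex.Im (c i) * Rintegral mu setT (g i).
    by case: (c i) => a b /=; rewrite mulr0 add0r mulrC.
  under eq_Rintegral do under eq_bigr do rewrite h.
  under [RHS]eq_bigr do rewrite h'.
  rewrite Rint_sum; last by move=> i; exact: intZ.
  by apply: eq_bigr => i _; rewrite RintegralZl.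
Qed.
End H.

Theorem theoremC3 (R : realType) (dT : measure_display) (T : measurableType dT)
  (P0 : probability T R) (r : nat)
  (alpha beta : 'I_r -> T -> R) (k : T -> T -> R)
  (hk : forall x x', k x x' = \sum_(i < r) alpha i x * beta i x')
  (hint : forall i j, P0.-integrable setT (fun x => (beta i x * alpha j x)%:E))
  (z : 'cV[R[i]]_r) (lambda : R[i]) (hz0 : z != 0)
  (heig : (map_mx conjc z)^T *m map_mx (fun a : R => a%:C%C) (Mrho P0 beta alpha)
          = lambda *: (map_mx conjc z)^T) :
  let zeta := fun x' : T => \sum_(i < r) z i 0 * (beta i x')%:C%C in
  forall x' : T, koopman_adj P0 k zeta x' = conjc lambda * zeta x'.
Proof.
move=> zeta x'; rewrite /koopman_adj.
have E : (fun x => (k x x')%:C%C * zeta x) =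
  (fun x => \sum_(p : 'I_r * 'I_r) (z p.2 0 * (beta p.1 x')%:C%C) *
     ((fun (p : 'I_r * 'I_r) x => beta p.2 x * alpha p.1 x) p x)%:C%C).
  apply: funext => x; rewrite hk /zeta rmorph_sum mulr_suml -(pair_bigA _ (fun i j => z j 0 * (beta i x')%:C%C * (beta j x * alpha i x)%:C%C)) /=.
  apply: eq_bigr => i _; rewrite mulr_sumr; apply: eq_bigr => j _.
  rewrite !rmorphM /=; ring.
rewrite E cint_lin; last by move=> p; exact: hint.
have Hi i : \sum_j z j 0 * ((Mrho P0 beta alpha) j i)%:C%C = conjc lambda * z i 0.
  have := congr1 (fun A : 'rV[R[i]]_r => A ord0 i) heig; rewrite !mxE /=.
  under eq_bigr do rewrite !mxE.
  move/(congr1 conjc); rewrite rmorphM /= conjcK rmorph_sum /= => <-.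
  apply: eq_bigr => j _; by rewrite rmorphM /= conjcK oppr0 mxE.
rewrite /zeta mulr_sumr -(pair_bigA _ (fun i j => z j 0 * (beta i x')%:C%C * (Rintegral P0 setT (fun x => beta j x * alpha i x))%:C%C)) /=; apply: eq_bigr => i _.
rewrite mulrA -Hi mulr_suml.
apply: eq_bigr => j _; rewrite mxE; ring.
Qed.
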